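(* Let $a\in(-1,0)$ and $\alpha\in\mathbb{R}$, and let $$P_1(x)=a x_1+x_2+\tfrac32 a x_1x_2+\tfrac32 x_2^2+\alpha x_1,\qquad P_2(x)=x_1+a x_2+a x_2^2 .$$ For every $\mathcal{T}\in\mathbb{R}^2$ such that the translated homoclinic orbit $\{x+\mathcal{T}:\ -x_1^2+x_2^2(1+x_2)=0,\ x_2<0\}$ is contained in $\mathbb{R}_{>}^2$, the translated polynomial map $\bar x\mapsto P(\bar x-\mathcal{T})$, considered on $\mathbb{R}_{\ge}^2$, is nonkinetic, i.e. it contains a cross-negative term.
   Context: $\mathbb{R}_{>}^2$ is the open positive quadrant. For a polynomial map $F=(F_1,F_2)$ written as a sum of monomials, a term of $F_s$ is cross-negative if it is a monomial with negative coefficient not containing the factor $\bar x_s$ (so it is negative at some nonnegative point with $\bar x_s=0$); $F$ is nonkinetic if it has at least one cross-negative term. *)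

(* Defs.v *)
From HB Require Import structures.
From mathcomp Require Import all_boot all_order all_algebra.
From mathcomp Require Import reals.
From mathcomp Require Import mpoly.
Set Implicit Arguments. Unset Strict Implicit. Unset Printing Implicit Defensive.
Import Order.TTheory GRing.Theory Num.Theory.
Local Open Scope ring_scope.

Definition i1 : 'I_2 := ord0.
Definition i2 : 'I_2 := ord_max.

Section Defs.
Variable R : realType.

Definition P1 (a alpha : R) : {mpoly R[2]} :=
  a *: 'X_i1 + 'X_i2 + (3 / 2 * a) *: ('X_i1 * 'X_i2)
  + (3 / 2) *: ('X_i2 ^+ 2) + alpha *: 'X_i1.

Definition P2 (a : R) : {mpoly R[2]} :=
  'X_i1 + a *: 'X_i2 + a *: ('X_i2 ^+ 2).

Definition P (a alpha : R) (s : 'I_2) : {mpoly R[2]} :=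
  if s == i1 then P1 a alpha else P2 a.

Definition translate (T : 'I_2 -> R) (p : {mpoly R[2]}) : {mpoly R[2]} :=
  comp_mpoly [tuple 'X_i - (T i)%:MP | i < 2] p.

Definition cross_negative (F : 'I_2 -> {mpoly R[2]}) (s : 'I_2)
    (m : 'X_{1..2}) : Prop :=
  (F s)@_m < 0 /\ m s = 0%N.

Definition nonkinetic (F : 'I_2 -> {mpoly R[2]}) : Prop :=
  exists s m, cross_negative F s m.

Definition homoclinic (x : 'I_2 -> R) : Prop :=
  - (x i1) ^+ 2 + (x i2) ^+ 2 * (1 + x i2) = 0 /\ x i2 < 0.

End Defs.

(* Main.v *)
Require Import Defs.
From HB Require Import structures.
From mathcomp Require Import all_boot all_order all_algebra.
From mathcomp Require Import reals.
From mathcomp Require Import mpoly.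
From mathcomp Require Import ring lra.
Import Order.TTheory GRing.Theory Num.Theory.
Local Open Scope ring_scope.
Lemma c0 (R : realType) (a : R) (T : 'I_2 -> R) :
  (translate T (P2 a))@_0 = - T i1 - a * T i2 + a * T i2 ^+ 2.
Proof.
rewrite /translate /P2 !(comp_mpolyD, comp_mpolyZ) rmorphXn !comp_mpolyXU.
rewrite !(mcoeffD, mcoeffZ) !nth_mktuple.
have e : forall q : {mpoly R[2]}, (q ^+ 2)@_0 = (q@_0) ^+ 2.
  by move=> q; rewrite -[LHS]/(mcoeff 0 (q ^+ 2)) rmorphXn.
rewrite e; rewrite [X in X@_0 ^+ 2](comp_mpolyXU i2) nth_mktuple !(mcoeffB, mcoeffX, mcoeffC) /=.
have u : forall i : 'I_2, (U_(i)%MM == 0%MM) = false.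
  by move=> i; rewrite -mdeg_eq0 mdeg1.
rewrite !u eqxx /=. ring.

Qed.

Lemma hpt (R : realType) (T : 'I_2 -> R) s :
  (forall x : 'I_2 -> R, homoclinic x ->
     0 < x i1 + T i1 /\ 0 < x i2 + T i2) ->
  0 < s -> s < 1 ->
  0 < (s^+2 - 1) * s + T i1 /\ 0 < (s ^+ 2 - 1) + T i2.
Proof.
move=> H s0 s1.
have := H (fun i => if i == i1 then (s^+2 - 1) * s else s ^+ 2 - 1).
rewrite /homoclinic eqxx. have -> : (i2 == i1) = false by [].
move=> hh; apply: hh; split; first by ring.
nra.
Qed.

Theorem lemma2 (R : realType) (a alpha : R) (T : 'I_2 -> R) :
  -1 < a -> a < 0 ->
  (forall x : 'I_2 -> R, homoclinic x ->
     0 < x i1 + T i1 /\ 0 < x i2 + T i2) ->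
  nonkinetic (fun s => translate T (P a alpha s)).
Proof.
move=> a1 a0 H; exists i2, 0%MM; split; last by rewrite mnm0E.
rewrite /P /=.
rewrite c0.
have [h1 h2] := @hpt _ T (1/2) H ltac:(lra) ltac:(lra).
have T2 : 1 <= T i2.
  case: (lerP 1 (T i2)) => // lt.
  have [_ h4] := @hpt _ T (1 - T i2) H ltac:(nra) ltac:(nra).
  nra.
have q : 0 <= T i2 * (T i2 - 1) by nra.
have : a * (T i2 * (T i2 - 1)) <= 0 by nra.
nra.
Qed.
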